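(* Let $n\ge t\ge1$ and write $n=at+b$ with $a\ge 1$ and $0\le b\le t-1$. Let $X_{n,t}$ be the set of integer sequences $i_1<\cdots<i_a$ such that (1) $(j-1)t+b+1\le i_j\le jt$ for $1\le j\le a$, and (2) $i_{j+1}-i_j\le t$ for $1\le j\le a-1$. Then $|X_{n,t}|=\binom{a+t-b-1}{a}$. *)

(* Defs.v *)
From mathcomp Require Import all_boot.
Set Implicit Arguments. Unset Strict Implicit. Unset Printing Implicit Defensive.

(* A sequence i_1 < ... < i_a is represented by s : seq nat of size a with
   i_j = nth 0 s (j-1).  X_{n,t} membership predicate (a, b determined by n, t
   as a = n %/ t, b = n %% t). *)
Definition in_X (n t : nat) (s : seq nat) : bool :=
  let a := n %/ t in let b := n %% t in
  [&& size s == a,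
      sorted ltn s,
      [forall j : 'I_a, ((j * t + b + 1 <= nth 0 s j) && (nth 0 s j <= j.+1 * t))] &
      [forall j : 'I_a, (j.+1 < a) ==> (nth 0 s j.+1 - nth 0 s j <= t)]].

(* Every element of X_{n,t} has entries <= a*t <= n, so it is faithfully
   represented as an a-tuple of elements of 'I_(n.+1). *)
Definition X_nt (n t : nat) : {set (n %/ t).-tuple 'I_n.+1} :=
  [set s | in_X n t (map (@nat_of_ord _) (val s))].

(* Main.v *)
Require Import Defs.
From mathcomp Require Import all_boot zify.

Lemma in_XP n t s :
  reflect [/\ size s = n %/ t,
     (forall j, j < n %/ t -> j * t + n %% t + 1 <= nth 0 s j <= j.+1 * t) &
     (forall j, j.+1 < n %/ t -> nth 0 s j < nth 0 s j.+1 /\ nth 0 s j.+1 - nth 0 s j <= t)]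
   (in_X n t s).
Proof.
rewrite /in_X /=.
apply: (iffP and4P) => [[/eqP hs /sortedP hso /forallP h1 /forallP h2] | [hs h1 h2]].
  split => // j hj; first exact: (h1 (Ordinal hj)).
  split; first by apply: hso; rewrite hs.
  by move: (h2 (Ordinal (ltnW hj))); rewrite /= hj.
split; first by apply/eqP.
- by apply/(sortedP 0) => i; rewrite hs => /h2 [].
- by apply/forallP => j; apply: h1.
- apply/forallP => j; apply/implyP => /h2 []; done.
Qed.

Lemma sorted_gap (s : seq nat) : sorted ltn s ->
  forall i k, i + k < size s -> nth 0 s i + k <= nth 0 s (i + k).
Proof.
move=> /(sortedP 0) hs i; elim=> [|k IH] hk; first by rewrite !addn0.
have hk' : i + k < size s by rewrite addnS in hk; lia.
have := IH hk'.
have := hs (i + k); rewrite -addnS => /(_ hk). lia.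
Qed.

Lemma nth_mk A m m' (F : nat -> nat -> nat) (x : A.-tuple 'I_m.+1) j :
  j < A -> F j (nth 0 (map val x) j) <= m' ->
  nth 0 (map val [tuple (inord (F i (tnth x i)) : 'I_m'.+1) | i < A]) j
   = F j (nth 0 (map val x) j).
Proof.
move=> hj hF.
rewrite (nth_map ord0) ?size_tuple // -(tnth_nth _ _ (Ordinal hj)) tnth_mktuple.
by rewrite (nth_map ord0) ?size_tuple // -(tnth_nth _ _ (Ordinal hj)) /= inordK //
  -(nth_map _ 0) ?size_tuple // (tnth_nth ord0).
Qed.

Lemma tnthE A m (x : A.-tuple 'I_m) (i : 'I_A) :
  nat_of_ord (tnth x i) = nth 0 (map val x) i.
Proof. by rewrite (nth_map (tnth x i)) ?size_tuple // -tnth_nth. Qed.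

Lemma mainl n t : 0 < t -> 0 < n %/ t ->
  #|X_nt n t| = 'C(n %/ t + t - n %% t - 1, n %/ t).
Proof.
move=> t0 A0.
have hB : n %% t < t := ltn_pmod n t0.
have hn : n = n %/ t * t + n %% t := divn_eq n t.
set A := n %/ t in A0 hn *. set B := n %% t in hB hn *.
have [N' hN] : exists N', A + t - B - 1 = N'.+1 by exists (A + t - B - 2); lia.
rewrite hN -card_ltn_sorted_tuples.
set Y := [set y : A.-tuple 'I_N'.+1 | sorted ltn (map val y)].
pose f (x : A.-tuple 'I_n.+1) : A.-tuple 'I_N'.+1 :=
  [tuple (inord (i.+1 * t.+1 - 1 - tnth x i) : 'I_N'.+1) | i < A].
pose g (y : A.-tuple 'I_N'.+1) : A.-tuple 'I_n.+1 :=
  [tuple (inord (i.+1 * t.+1 - 1 - tnth y i) : 'I_n.+1) | i < A].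
have memX (x : A.-tuple 'I_n.+1) : x \in X_nt n t = in_X n t (map val x) by rewrite inE.
have memY (y : A.-tuple 'I_N'.+1) : reflect (forall j, j.+1 < A ->
    nth 0 (map val y) j < nth 0 (map val y) j.+1) (y \in Y).
  by rewrite inE; apply: (iffP (sortedP 0)) => h j; move: (h j); rewrite size_map size_tuple.
have fX x : x \in X_nt n t -> f x \in Y.
  rewrite memX => /in_XP [_ h1 h2]; apply/memY => j hj.
  have hj0 := ltnW hj.
  rewrite -/A -/B in h1 h2.
  move: (h1 j hj0) (h1 j.+1 hj) (h2 j hj) => ha hb [hc hd].
  rewrite /f !(@nth_mk _ _ _ (fun j v => j.+1 * t.+1 - 1 - v)) //;
    rewrite ?mulSn ?mulnS; nia.
have bndY (y : A.-tuple 'I_N'.+1) : y \in Y -> forall j, j < A ->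
    j <= nth 0 (map val y) j <= t - B - 1 + j.
  rewrite inE => hs j hj.
  have hg := sorted_gap _ hs; rewrite size_map size_tuple in hg.
  have hlt k : k < A -> nth 0 (map val y) k < N'.+1.
    by move=> hk; rewrite (nth_map (ord0 : 'I_N'.+1)) ?size_tuple // ltn_ord.
  have := hg 0 j; have := hg j (A - 1 - j); have := hlt (A - 1).
  have -> : j + (A - 1 - j) = A - 1 by lia.
  rewrite add0n => h3 h4 h5; have {h3} := h3 ltac:(lia); have {h4} := h4 ltac:(lia); have {h5} := h5 ltac:(lia). lia.
have gY (y : A.-tuple 'I_N'.+1) : y \in Y -> g y \in X_nt n t.
  move=> hy; have hb := bndY y hy; move/memY: hy => hs.
  rewrite memX; apply/in_XP; rewrite -/A -/B; split.
  - by rewrite size_map size_tuple.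
  - move=> j hj; have := hb j hj => hbj.
    rewrite /g (@nth_mk _ _ _ (fun j v => j.+1 * t.+1 - 1 - v)) //;
      rewrite ?mulSn ?mulnS; nia.
  - move=> j hj; have hj0 := ltnW hj.
    move: (hb j hj0) (hb j.+1 hj) (hs j hj) => ha hb' hc.
    rewrite /g !(@nth_mk _ _ _ (fun j v => j.+1 * t.+1 - 1 - v)) //;
      rewrite ?mulSn ?mulnS; nia.
have gf x : x \in X_nt n t -> g (f x) = x.
  rewrite memX => /in_XP [_ h1 _]; rewrite -/A -/B in h1.
  apply: eq_from_tnth => i; rewrite !tnth_mktuple; apply: val_inj.
  have := h1 i (ltn_ord i); rewrite -tnthE => hi.
  have := ltn_ord i => hA.
  rewrite /= !inordK; rewrite ?mulSn ?mulnS; nia.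
have fg (y : A.-tuple 'I_N'.+1) : y \in Y -> f (g y) = y.
  move=> hy; have hb := bndY y hy.
  apply: eq_from_tnth => k; rewrite !tnth_mktuple; apply: val_inj.
  have := hb k (ltn_ord k); rewrite -tnthE => hi.
  have := ltn_ord (tnth y k) => hi'.
  have := ltn_ord k => hA.
  rewrite /= !inordK; rewrite ?mulSn ?mulnS; nia.
apply/eqP; rewrite eqn_leq; apply/andP; split.
  rewrite -(card_in_imset (f := f)); first apply: subset_leq_card.
    by apply/subsetP => _ /imsetP [x hx ->]; apply: fX.
  by move=> x1 x2 h1 h2 e; rewrite -(gf _ h1) -(gf _ h2) e.
rewrite -(card_in_imset (f := g)); first apply: subset_leq_card.
  by apply/subsetP => _ /imsetP [x hx ->]; apply: gY.
by move=> x1 x2 h1 h2 e; rewrite -(fg _ h1) -(fg _ h2) e.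
Qed.

Theorem corollary3p5 (n t a b : nat) :
  1 <= t -> t <= n -> n = a * t + b -> 1 <= a -> b <= t - 1 ->
  #|X_nt n t| = 'C(a + t - b - 1, a).
Proof.
move=> t1 _ hn a1 hb.
have hb' : b < t by lia.
have ha : n %/ t = a by rewrite hn divnMDl ?divn_small ?addn0 //; lia.
have hbb : n %% t = b by rewrite hn modnMDl modn_small.
rewrite mainl //; last by rewrite ha.
by rewrite ha hbb.
Qed.
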